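(* Let $q\in(0,1)$ and let $w\ge 2$ be an integer. Consider a clique of size $w$ with vertices $u,1,2,\dots,w-1$, where $u$ (the parent of the clique) is initially active and $1,\dots,w-1$ (the children inside the clique) are initially inactive. For $1\le i\le w-1$, vertex $i$ has, besides the $w-1$ other clique vertices, exactly $X_i$ further neighbors (its own children), which are inactive and remain inactive throughout; thus vertex $i$ has degree $X_i+w-1$. The contagion evolves in discrete time: an inactive vertex $i$ becomes active as soon as its proportion of active neighbors is strictly greater than $q$, and active vertices remain active. Let $L$ be the final number of active vertices among $1,\dots,w-1$, and let $X_{(1)}\le X_{(2)}\le\dots\le X_{(w-1)}$ be the order statistics of $(X_i)_{1\le i\le w-1}$. Then $$L=\min\Big\{i\in\{1,\dots,w-1\}\;\Big|\;\lfloor q(X_{(i)}+w-1)\rfloor+1>i\Big\}-1,$$ with the convention $L=w-1$ if this set is empty (i.e. if $\lfloor q(X_{(i)}+w-1)\rfloor+1\le i$ for all $1\le i\le w-1$).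
   Context: The $X_i$ are nonnegative integers. In the paper's setting, this clique is a clique of the random graph obtained as the one-mode projection of an alternating branching process, and $X_i$ is the number of children of vertex $i$ in that graph. *)

(* Defs.v *)
From HB Require Import structures.
From mathcomp Require Import all_boot all_order all_algebra.
From mathcomp Require Import reals.
Set Implicit Arguments. Unset Strict Implicit. Unset Printing Implicit Defensive.
Import Order.TTheory GRing.Theory Num.Theory.
Local Open Scope ring_scope.

(* The clique has vertices u, 1, ..., w-1.  The children 1..w-1 are indexed
   by 'I_(w-1) (child i+1 of the paper is the ordinal i).  X i is the number
   of extra (own-children) neighbours of that child; these stay inactive.
   The state of the contagion is the set of active children; u is always
   active.  Degree of child i is X i + w - 1; its active neighbours at a
   given time are u plus the active children other than itself. *)

Definition deg_child (w : nat) (X : 'I_(w.-1) -> nat) (i : 'I_(w.-1)) : nat :=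
  (X i + w.-1)%N.

Definition active_nbrs (w : nat) (S : {set 'I_(w.-1)}) (i : 'I_(w.-1)) : nat :=
  (1 + #|S :\ i|)%N.

Definition step (R : realType) (q : R) (w : nat) (X : 'I_(w.-1) -> nat)
    (S : {set 'I_(w.-1)}) : {set 'I_(w.-1)} :=
  S :|: [set i | (i \notin S) &&
                 (q < (active_nbrs S i)%:R / (deg_child X i)%:R)].

Definition active_at (R : realType) (q : R) (w : nat) (X : 'I_(w.-1) -> nat)
    (t : nat) : {set 'I_(w.-1)} :=
  iter t (step q X) set0.

(* order statistics, 1-based: X_(1) <= ... <= X_(w-1) *)
Definition order_stat (w : nat) (X : 'I_(w.-1) -> nat) (i : nat) : nat :=
  nth 0%N (sort leq [seq X j | j <- enum 'I_(w.-1)]) i.-1.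

Definition cond (R : realType) (q : R) (w : nat) (X : 'I_(w.-1) -> nat)
    (i : nat) : bool :=
  (i%:Z < Num.floor (q * (order_stat X i + w.-1)%:R) + 1)%R.

(* Main.v *)
Require Import Defs.
From HB Require Import structures.
From mathcomp Require Import all_boot all_order all_algebra.
From mathcomp Require Import reals.
Import Order.TTheory GRing.Theory Num.Theory.
From mathcomp Require Import zify.
Lemma sorted_count (P : pred nat) (s : seq nat) j :
  (forall x y, (x <= y)%N -> P y -> P x) -> sorted leq s -> (j < size s)%N ->
  P (nth 0%N s j) = (j < count P s)%N.
Proof.
move=> Pdown; elim: s j => [|x s IH] j //= srt.
have [allx srts] : all (leq x) s /\ sorted leq s.
  by move: srt; rewrite /= (path_sortedE leq_trans) => /andP.
have c0 : ~~ P x -> count P s = 0%N.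
  move=> nPx; apply/eqP; rewrite -leqn0 leqNgt -has_count; apply/negP => /hasP [y ys Py].
  by move/allP: allx => /(_ y ys) /Pdown /(_ Py); rewrite (negbTE nPx).
case: j => [|j] /= js.
  by case: (P x) (c0) => //= ->.
rewrite IH // ?ltnS //; case Px: (P x) => //=.
by rewrite c0 ?Px.
Qed.

Lemma card_count (n : nat) (p : pred 'I_n) : #|[set i | p i]| = count p (enum 'I_n).
Proof. by rewrite cardsE cardE /enum_mem size_filter count_filter; apply: eq_count => i; rewrite /= andbT. Qed.
Local Open Scope ring_scope.
Lemma foo (R : realType) (j:nat) (y : R) : (j%:Z < Num.floor y + 1) = ~~ (y < j%:R).
Proof. by rewrite ltzD1 floor_ge_int -leNgt. Qed.
Lemma iterfix (f : nat -> nat) M : {homo f : a b / (a <= b)%N} -> f M = M ->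
  (forall k, (k < M)%N -> (k < f k)%N) -> forall t, (M <= t)%N -> iter t f 0%N = M.
Proof.
move=> fm fM fk.
have H : forall t, (minn t M <= iter t f 0 <= M)%N.
  elim=> [|t /andP [IH1 IH2]] /=; first by rewrite min0n.
  have h2 : (f (iter t f 0) <= M)%N by rewrite -fM fm.
  rewrite h2 andbT.
  case: (ltnP (iter t f 0) M) => h.
    move: IH1 (fk _ h); rewrite geq_min (leqNgt M) h orbF => ta hb; by rewrite geq_min (leq_ltn_trans ta hb).
  have -> : iter t f 0 = M by apply/eqP; rewrite eqn_leq IH2 h.
  by rewrite fM geq_minr.
move=> t tM; have /andP [] := H t; rewrite (minn_idPr tM) => ??; apply/eqP; rewrite eqn_leq; apply/andP; split => //.
Qed.

Theorem lemma1 (R : realType) (q : R) (w : nat) (X : 'I_(w.-1) -> nat) :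
  0 < q -> q < 1 -> (2 <= w)%N ->
  exists L : nat,
    (exists T : nat, forall t : nat, (T <= t)%N -> #|active_at q X t| = L) /\
    ( ((forall i : nat, (1 <= i <= w.-1)%N -> ~~ cond q X i) /\ L = w.-1)
      \/ (exists m : nat, [/\ (1 <= m <= w.-1)%N, cond q X m,
             (forall i : nat, (1 <= i < m)%N -> ~~ cond q X i)
           & L = m.-1]) ).
Proof.
move=> q0 q1 w2.
set n := w.-1.
have n0 : (0 < n)%N by rewrite /n; lia.
pose P (k x : nat) := q * (x + n)%:R < (k.+1)%:R.
pose A k := [set i | P k (X i)].
pose cnt k := #|A k|.
have Pdown k x y : (x <= y)%N -> P k y -> P k x.
  move=> xy; apply: le_lt_trans; rewrite (ler_wpM2l (ltW q0)) // ler_nat; lia.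
have Pmono k k' x : (k <= k')%N -> P k x -> P k' x.
  move=> kk Pk; apply: (lt_le_trans Pk); rewrite ler_nat; lia.
have cnt_mono : {homo cnt : a b / (a <= b)%N}.
  move=> a b ab; apply: subset_leq_card; apply/subsetP => i; rewrite !inE; exact: Pmono.
have stepE S : step q X S = S :|: A #|S|.
  apply/setP => i; rewrite !inE; case iS: (i \in S) => //=.
  rewrite /active_nbrs (_ : #|S :\ i| = #|S|); last by rewrite (cardsD1 i S) iS.
  rewrite /deg_child -/n ltr_pdivlMr ?ltr0n; last by lia.
  by rewrite /P add1n.
have actE t : #|active_at q X t| = iter t cnt 0%N.
  suff : active_at q X t \subset A #|active_at q X t| /\ #|active_at q X t| = iter t cnt 0%N by case.
  elim: t => [|t [sub IH]]; first by rewrite /active_at /= sub0set cards0.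
  have e : active_at q X t.+1 = A #|active_at q X t|.
    by rewrite /active_at iterS -/(active_at q X t) stepE; apply/setUidPr.
  rewrite e /= -IH; split => //.
  apply/subsetP => i; rewrite !inE; apply: Pmono; apply: subset_leq_card; rewrite -e.
  by rewrite /active_at iterS -/(active_at q X t) stepE subsetUl.
pose s := sort leq [seq X j | j <- enum 'I_n].
have sz : size s = n by rewrite size_sort size_map size_enum_ord.
have cntE k j : (1 <= j <= n)%N -> (j <= cnt k)%N = P k (order_stat X j).
  move=> /andP [j1 jn].
  rewrite /order_stat -/n -/s sorted_count //; last by rewrite sz; lia.
    rewrite /cnt /A card_count -(count_map X (P k)) -/s.
    by rewrite -(count_sort leq); case: j j1 jn.
    exact: Pdown.
  exact: (sort_sorted leq_total).
have condE j : (1 <= j <= n)%N -> ~~ cond q X j = (j <= cnt j.-1)%N.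
  move=> jn; rewrite cntE // /cond /P.
  case: j jn => // j _; rewrite /= foo negbK //.
have cntn : (cnt n <= n)%N.
  by apply: leq_trans (max_card _) _; rewrite card_ord.
case: (boolP [forall j : 'I_n, ~~ cond q X j.+1]) => [/forallP Hall | /forallPn Hex].
  have good j : (1 <= j <= n)%N -> ~~ cond q X j.
    move=> /andP [j1 jn]; have := Hall (Ordinal (n:=n) (m:=j.-1) ltac:(lia)).
    by rewrite /= prednK //; lia.
  exists n; split; last by left.
  exists n => t tn; rewrite actE; apply: iterfix => //.
    apply/eqP; rewrite eqn_leq cntn /=.
    have := good n; rewrite condE; last lia.
    move=> /(_ ltac:(lia)) h; apply: leq_trans h _; apply: cnt_mono; lia.
  move=> k kn; have := good k.+1; rewrite condE /=; last lia.
  by apply; lia.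
have exm : exists m, (1 <= m <= n)%N && cond q X m.
  by case: Hex => j; rewrite negbK => c; exists j.+1; rewrite c ltn_ord.
pose m := ex_minn exm.
have [mP mmin] : ((1 <= m <= n)%N && cond q X m) /\
    (forall i, (1 <= i <= n)%N && cond q X i -> (m <= i)%N).
  by rewrite /m; case: ex_minnP.
move/andP: mP => [mn cm].
have good i : (1 <= i < m)%N -> ~~ cond q X i.
  move=> im; apply/negP => ci; have := mmin i; rewrite ci andbT; lia.
exists m.-1; split; last by right; exists m; split.
exists m.-1 => t tn; rewrite actE; apply: iterfix => //.
  apply/eqP; rewrite eqn_leq; apply/andP; split.
    have := condE m mn; rewrite cm /= => /esym/negbT; rewrite -ltnNge => h; lia.
  case: (posnP m.-1) => [-> //|m2].
  have := good m.-1; rewrite condE; last lia.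
  move=> /(_ ltac:(lia)) h; apply: leq_trans h _; apply: cnt_mono; lia.
move=> k km; have := good k.+1; rewrite condE /=; last lia.
by apply; lia.
Qed.
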